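(* Let $\mathcal{X}$ be a countable set, $\mathcal{D}$ a distribution on $\mathcal{X}\times\{0,1\}$, $\alpha,\epsilon>0$, and let $(f_1,f_2)$ be a pair of models output by Reconcile$(f_1^0,f_2^0,\alpha,\epsilon,\mathcal{D})$ for some models $f_1^0,f_2^0:\mathcal{X}\to[0,1]$. Let $E\subseteq\mathcal{X}$ with $\mu(E)>0$ and let $p_j(E)=\mathbb{E}_{(x,y)\sim\mathcal{D}}[f_j(x)\mid x\in E]$ for $j=1,2$. Then $$|p_1(E)-p_2(E)|\le\frac{\alpha}{\mu(E)}+\epsilon.$$
   Context: $\mu(S)=\Pr_{(x,y)\sim\mathcal{D}}[x\in S]$. Brier score $B(f,\mathcal{D})=\mathbb{E}[(f(x)-y)^2]$. $U_\epsilon(f_1,f_2)=\{x:|f_1(x)-f_2(x)|>\epsilon\}$, $U^>_\epsilon$, $U^<_\epsilon$ its subsets where $f_1>f_2$, resp. $f_1<f_2$. Patch: $h(x,f;g,\Delta)=f(x)+\Delta$ if $g(x)=1$, else $f(x)$. $\mathrm{Round}(v;m)$ is a closest point to $v$ in $\{k/m:k\in\mathbb{Z},-m\le k\le m\}$. Algorithm Reconcile$(f_1,f_2,\alpha,\epsilon,\mathcal{D})$: set $m=\lceil \frac{2}{\sqrt{\alpha}\epsilon}\rceil$, $t_1=t_2=0$, $f_1^0=f_1$, $f_2^0=f_2$. While $\mu(U_\epsilon(f_1^{t_1},f_2^{t_2}))\ge\alpha$: for each $\bullet\in\{>,<\}$, $i\in\{1,2\}$ let $v_*^\bullet=\mathbb{E}[y\mid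 x\in U^\bullet_\epsilon(f_1^{t_1},f_2^{t_2})]$, $v_i^\bullet=\mathbb{E}[f_i^{t_i}(x)\mid x\in U^\bullet_\epsilon(f_1^{t_1},f_2^{t_2})]$; choose $(i,\bullet)$ maximizing $\mu(U^\bullet_\epsilon(f_1^{t_1},f_2^{t_2}))(v_*^\bullet-v_i^\bullet)^2$ (product $0$ for mass-zero sets; ties arbitrary); let $g$ be the indicator of that set, $\tilde\Delta=\mathbb{E}[y\mid g=1]-\mathbb{E}[f_i^{t_i}(x)\mid g=1]$, $\Delta=\mathrm{Round}(\tilde\Delta;m)$; set $f_i^{t_i+1}=h(\cdot,f_i^{t_i};g,\Delta)$ and increment $t_i$. On exit, output $(f_1^{t_1},f_2^{t_2})$. *)

(* Defs.v *)
From mathcomp Require Import all_boot all_order all_algebra.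
From mathcomp Require Import all_classical all_reals all_analysis.
Set Implicit Arguments. Unset Strict Implicit. Unset Printing Implicit Defensive.
Import Order.TTheory GRing.Theory Num.Theory.
Local Open Scope classical_set_scope.
Local Open Scope ring_scope.

Section Reconcile.
Context {R : realType} {d : measure_display} {X : measurableType d}.
(* D : a distribution on X x {0,1}; the label y is the boolean z.2 *)
Variable P : probability (X * bool)%type R.

Definition mu (S : set X) : R := fine (P (S `*` setT)).

(* E[h(x,y) | x in S]  (MathComp convention r / 0 = 0 when mu(S) = 0) *)
Definition condE (S : set X) (h : X * bool -> R) : R :=
  Rintegral P (S `*` setT) h / mu S.

Definition pE (f : X -> R) (S : set X) : R := condE S (fun z => f z.1).
Definition ycond (S : set X) : R := condE S (fun z => (z.2)%:R).

Definition U (eps : R) (f1 f2 : X -> R) : set X := [set x | eps < `|f1 x - f2 x|].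
Definition Ugt (eps : R) (f1 f2 : X -> R) : set X := [set x | eps < `|f1 x - f2 x| /\ f2 x < f1 x].
Definition Ult (eps : R) (f1 f2 : X -> R) : set X := [set x | eps < `|f1 x - f2 x| /\ f1 x < f2 x].

(* the patch h(x, f; g, Delta), with g the indicator of S *)
Definition patch (f : X -> R) (S : set X) (Delta : R) : X -> R :=
  fun x => if `[< S x >] then f x + Delta else f x.

Definition is_round (v : R) (m : int) (r : R) : Prop :=
  exists k : int, [/\ - m <= k <= m, r = k%:~R / m%:~R &
    forall k' : int, - m <= k' <= m -> `|v - r| <= `|v - k'%:~R / m%:~R| ].

Definition m_param (alpha eps : R) : int := Num.ceil (2 / (Num.sqrt alpha * eps)).

Definition Ub (eps : R) (b : bool) (f1 f2 : X -> R) : set X :=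
  if b then Ugt eps f1 f2 else Ult eps f1 f2.

Definition pick (i : bool) (f1 f2 : X -> R) : X -> R := if i then f1 else f2.

Definition score (eps : R) (f1 f2 : X -> R) (i b : bool) : R :=
  let S := Ub eps b f1 f2 in
  if mu S == 0 then 0 else mu S * (ycond S - pE (pick i f1 f2) S) ^+ 2.

(* One iteration of the while loop of Reconcile(., ., alpha, eps, D),
   nondeterministic in the tie-breaking of the argmax and of Round. *)
Definition reconcile_step (alpha eps : R) (st st' : (X -> R) * (X -> R)) : Prop :=
  let f1 := st.1 in let f2 := st.2 in
  alpha <= mu (U eps f1 f2) /\
  exists (i b : bool) (Delta : R),
    [/\ forall i' b', score eps f1 f2 i' b' <= score eps f1 f2 i b,
        is_round (ycond (Ub eps b f1 f2) - pE (pick i f1 f2) (Ub eps b f1 f2))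
                 (m_param alpha eps) Delta &
        st' = (if i then (patch f1 (Ub eps b f1 f2) Delta, f2)
               else (f1, patch f2 (Ub eps b f1 f2) Delta))].

Inductive reconcile_run (alpha eps : R) :
  (X -> R) * (X -> R) -> (X -> R) * (X -> R) -> Prop :=
| run_refl st : reconcile_run alpha eps st st
| run_step st st' st'' : reconcile_step alpha eps st st' ->
    reconcile_run alpha eps st' st'' -> reconcile_run alpha eps st st''.

Definition reconcile_output (alpha eps : R) (f1 f2 g1 g2 : X -> R) : Prop :=
  reconcile_run alpha eps (f1, f2) (g1, g2) /\ mu (U eps g1 g2) < alpha.

End Reconcile.

(* Main.v *)
Require Import Defs.
From mathcomp Require Import all_boot all_order all_algebra.
From mathcomp Require Import all_classical all_reals all_analysis.
From mathcomp Require Import lra.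
Set Implicit Arguments. Unset Strict Implicit. Unset Printing Implicit Defensive.
Import Order.TTheory GRing.Theory Num.Theory.
Local Open Scope classical_set_scope.
Local Open Scope ring_scope.

Lemma round_bounds (R : realType) (v : R) (m : int) (D : R) :
  0 < m -> is_round v m D ->
  [/\ -1 <= D <= 1, (v <= 0 -> D <= 0) & (0 <= v -> 0 <= D)].
Proof.
move=> m0 [k [/andP[k1 k2] -> cl]].
have mR : 0 < (m%:~R : R) by rewrite ltr0z.
have cl0 : `|v - k%:~R / m%:~R| <= `|v| .
  have := cl 0%R; rewrite mul0r subr0; apply.
  by apply/andP; split; rewrite ?oppr_le0 ltW.
have k1' : - (m%:~R : R) <= k%:~R by rewrite -mulrNz ler_int.
have k2' : (k%:~R : R) <= m%:~R by rewrite ler_int.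
set DD := k%:~R / m%:~R in cl0 *.
have hD : -1 <= DD <= 1.
  rewrite /DD ler_pdivlMr // ler_pdivrMr // mul1r mulN1r; by apply/andP.
split => //.
- move=> v0; rewrite leNgt; apply/negP => Dp.
  move: cl0; rewrite (ler0_norm v0) ltr0_norm; last by lra.
  lra.
- move=> v0; rewrite leNgt; apply/negP => Dp.
  move: cl0; rewrite (ger0_norm v0) gtr0_norm; last by lra.
  lra.
Qed.

Lemma meas_all (R : realType) d (X : measurableType d)
  (Xd : forall A : set X, measurable A) (g : X -> R) D : measurable_fun D g.
Proof. by move=> mD Y mY; exact: Xd. Qed.

Lemma integ1 (R : realType) d (X : measurableType d)
  (Xd : forall A : set X, measurable A) (P : probability (X * bool)%type R)
  (g : X -> R) (S : set X) : (exists M, forall x, `|g x| <= M) ->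
  P.-integrable (S `*` setT) (EFin \o (fun z => g z.1)).
Proof.
move=> [M hM].
have mS : measurable (S `*` [set: bool]) by apply: measurableX.
apply: measurable_bounded_integrable => //.
- by rewrite -ge0_fin_numE // fin_num_measure.
- apply: measurableT_comp; first exact: meas_all.
  exact: measurable_funS measurable_fst.
- exists M; split; first exact: num_real.
  by move=> M' hM' z _; exact: le_trans (hM z.1) (ltW hM').
Qed.

Definition bnd (R : realType) (X : Type) (g : X -> R) := exists M, forall x, `|g x| <= M.

Lemma bndB (R : realType) (X : Type) (f g : X -> R) : bnd f -> bnd g -> bnd (fun x => f x - g x).
Proof.
move=> [M hM] [N hN]; exists (M + N) => x.
by apply: le_trans (ler_normB _ _) _; apply: lerD.
Qed.

Lemma bndC (R : realType) (X : Type) (c : R) : bnd (fun _ : X => c).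
Proof. by exists `|c|. Qed.

Lemma intB (R : realType) d (X : measurableType d)
  (Xd : forall A : set X, measurable A) (P : probability (X * bool)%type R)
  (f1 f2 : X -> R) S : bnd f1 -> bnd f2 ->
  Rintegral P (S `*` setT) (fun z => f1 z.1) - Rintegral P (S `*` setT) (fun z => f2 z.1)
  = Rintegral P (S `*` setT) (fun z => f1 z.1 - f2 z.1).
Proof.
move=> b1 b2.
have mS : measurable (S `*` [set: bool]) by apply: measurableX.
by rewrite (RintegralB mS (integ1 Xd P S b1) (integ1 Xd P S b2)).
Qed.

Lemma Rint_cst (R : realType) d (X : measurableType d)
  (Xd : forall A : set X, measurable A) (P : probability (X * bool)%type R)
  (c : R) S : Rintegral P (S `*` setT) (fun _ => c) = c * mu P S.
Proof.
have mS : measurable (S `*` [set: bool]) by apply: measurableX.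
by rewrite Rintegral_cst.
Qed.

Lemma pE_gap (R : realType) d (X : measurableType d)
  (Xd : forall A : set X, measurable A) (P : probability (X * bool)%type R)
  (f1 f2 : X -> R) (c : R) S : bnd f1 -> bnd f2 -> 0 < c ->
  (forall x, S x -> c + f2 x <= f1 x) -> 0 < mu P S ->
  pE P f2 S < pE P f1 S.
Proof.
move=> b1 b2 c0 hS m0.
have mS : measurable (S `*` [set: bool]) by apply: measurableX.
rewrite /pE /condE -subr_gt0 -mulrBl (intB Xd P S b1 b2) pmulr_lgt0 ?invr_gt0 //.
apply: lt_le_trans (_ : 0 < c * mu P S) _; first exact: mulr_gt0.
rewrite -(Rint_cst Xd P c S).
apply: le_Rintegral => //.
- exact: (integ1 Xd P S (bndC _ c)).
- exact: (integ1 Xd P S (bndB b1 b2)).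
- by move=> z [Sz _]; rewrite lerBrDr; exact: hS.
Qed.

Definition invar (R : realType) (X : Type) (g1 g2 : X -> R) :=
  [/\ (forall x, `|g1 x - g2 x| <= 1), bnd g1 & bnd g2].

Lemma patch_bnd (R : realType) d (X : measurableType d) (f : X -> R) (S : set X) (D : R) :
  bnd f -> bnd (Defs.patch f S D).
Proof.
move=> [M hM]; exists (M + `|D|) => x; rewrite /Defs.patch; case: asboolP => _.
  by have := ler_normD (f x) D; have := hM x; lra.
by apply: le_trans (hM x) _; rewrite lerDl.
Qed.

Lemma m_pos (R : realType) (alpha eps : R) : 0 < alpha -> 0 < eps ->
  0 < m_param alpha eps.
Proof.
move=> a0 e0; rewrite /m_param ceil_gt0 divr_gt0 // mulr_gt0 //.
by rewrite sqrtr_gt0.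
Qed.

Lemma mu_ge0 (R : realType) d (X : measurableType d) (P : probability (X * bool)%type R) S :
  0 <= mu P S.
Proof. by rewrite /mu fine_ge0. Qed.

Lemma condE0 (R : realType) d (X : measurableType d) (P : probability (X * bool)%type R) S h :
  mu P S = 0 -> condE P S h = 0.
Proof. by rewrite /condE => ->; rewrite invr0 mulr0. Qed.


Lemma gap_gt (R : realType) d (X : measurableType d) (eps : R) (f1 f2 : X -> R) x :
  Ugt eps f1 f2 x -> eps + f2 x <= f1 x.
Proof. by move=> [h1 h2]; move: h1; rewrite gtr0_norm ?subr_gt0 // => h; lra. Qed.

Lemma gap_lt (R : realType) d (X : measurableType d) (eps : R) (f1 f2 : X -> R) x :
  Ult eps f1 f2 x -> eps + f1 x <= f2 x.
Proof. by move=> [h1 h2]; move: h1; rewrite ltr0_norm ?subr_lt0 // => h; lra. Qed.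

Lemma step_sign (R : realType) d (X : measurableType d)
  (Xd : forall A : set X, measurable A) (P : probability (X * bool)%type R)
  (eps : R) (e0 : 0 < eps) (f1 f2 : X -> R) (b1 : bnd f1) (b2 : bnd f2) (i b : bool) :
  (forall i' b', score P eps f1 f2 i' b' <= score P eps f1 f2 i b) ->
  (i == b -> ycond P (Ub eps b f1 f2) - pE P (Defs.pick i f1 f2) (Ub eps b f1 f2) <= 0) /\
  (i != b -> 0 <= ycond P (Ub eps b f1 f2) - pE P (Defs.pick i f1 f2) (Ub eps b f1 f2)).
Proof.
move=> hmax; set S := Ub eps b f1 f2.
have [m0|mpos] : mu P S = 0 \/ 0 < mu P S.
  by rewrite lt_neqAle mu_ge0 andbT; case: eqP; auto.
  by rewrite /ycond /pE !condE0 // subrr; split.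
have h := hmax (~~ i) b; rewrite /score -/S /= gt_eqF // ler_pM2l // in h.
have gap : if b then pE P f2 S < pE P f1 S else pE P f1 S < pE P f2 S.
  rewrite /S; clear h hmax; move: mpos; rewrite /S; clear S; case: b => mpos.
  - rewrite /= in mpos *; apply: (pE_gap Xd b1 b2 e0) => // x Sx; exact: gap_gt.
  - rewrite /= in mpos *; apply: (pE_gap Xd b2 b1 e0) => // x Sx; exact: gap_lt.
clear hmax; move: h gap mpos; rewrite /S; clear S; case: i; case: b => /= h gap mpos; split => // _; nra.
Qed.

Lemma step_inv (R : realType) d (X : measurableType d)
  (Xd : forall A : set X, measurable A) (P : probability (X * bool)%type R)
  (alpha eps : R) (a0 : 0 < alpha) (e0 : 0 < eps) st st' :
  reconcile_step P alpha eps st st' -> invar st.1 st.2 -> invar st'.1 st'.2.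
Proof.
case: st => f1 f2 /= [_ [i [b [D [hmax hr ->]]]]] [hd b1 b2].
rewrite /= in hmax hr.
have [hb sgn1 sgn2] := round_bounds (m_pos a0 e0) hr.
have [s1 s2] := step_sign Xd e0 b1 b2 hmax.
have Ds : (i == b -> D <= 0) /\ (i != b -> 0 <= D).
  by split => h; [apply: sgn1; apply: s1 | apply: sgn2; apply: s2].
clear hmax hr sgn1 sgn2 s1 s2.
move: Ds; case: i => Ds /=.
- split => //; last exact: patch_bnd.
  move=> x; rewrite /Defs.patch; case: asboolP => Sx; last exact: hd x.
  have := hd x; move: Ds Sx; case: b => /= -[Ds1 Ds2] [_ lt];
    [have := Ds1 isT | have := Ds2 isT]; rewrite !ler_norml; lra.
- split => //; last exact: patch_bnd.
  move=> x; rewrite /Defs.patch; case: asboolP => Sx; last exact: hd x.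
  have := hd x; move: Ds Sx; case: b => /= -[Ds1 Ds2] [_ lt];
    [have := Ds2 isT | have := Ds1 isT]; rewrite !ler_norml; lra.
Qed.

Lemma run_inv (R : realType) d (X : measurableType d)
  (Xd : forall A : set X, measurable A) (P : probability (X * bool)%type R)
  (alpha eps : R) (a0 : 0 < alpha) (e0 : 0 < eps) st st' :
  reconcile_run P alpha eps st st' -> invar st.1 st.2 -> invar st'.1 st'.2.
Proof.
elim => [//| s s' s'' hs _ IH] h; apply: IH; exact: (step_inv Xd a0 e0 hs).
Qed.


Theorem corollary1 (R : realType) (d : measure_display) (X : measurableType d)
  (Xcount : countable [set: X])
  (Xdiscrete : forall A : set X, measurable A)
  (P : probability (X * bool)%type R)
  (alpha eps : R) (halpha : 0 < alpha) (heps : 0 < eps)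
  (f10 f20 : X -> R)
  (hf10 : forall x, 0 <= f10 x <= 1) (hf20 : forall x, 0 <= f20 x <= 1)
  (f1 f2 : X -> R)
  (hout : reconcile_output P alpha eps f10 f20 f1 f2)
  (E : set X) (hE : 0 < mu P E) :
  `|pE P f1 E - pE P f2 E| <= alpha / mu P E + eps.
Proof.
move: hout => [hrun hU].
have inv0 : invar f10 f20.
  split.
  - by move=> x; rewrite ler_norml; have := hf10 x; have := hf20 x; lra.
  - by exists 1 => x; rewrite ger0_norm; have := hf10 x; lra.
  - by exists 1 => x; rewrite ger0_norm; have := hf20 x; lra.
have [hd b1 b2] := run_inv Xdiscrete halpha heps hrun inv0.
rewrite /pE /condE -mulrBl (intB Xdiscrete P E b1 b2).
rewrite normrM normfV (gtr0_norm hE) ler_pdivrMr // mulrDl divfK ?gt_eqF //.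
have mE : measurable (E `*` [set: bool]) by apply: measurableX.
have mU : measurable (U eps f1 f2 `*` [set: bool]) by apply: measurableX.
set I := Rintegral _ _ _.
have bI : bnd (fun x : X => \1_(U eps f1 f2) x : R).
  by exists 1 => x; rewrite indicE; case: (_ \in _); rewrite ?normr1 ?normr0.
have h1 : `|I| <= Rintegral P (E `*` setT) (fun z => `|f1 z.1 - f2 z.1|).
  exact: (le_normr_Rintegral mE (integ1 Xdiscrete P E (bndB b1 b2))).
have h2 : Rintegral P (E `*` setT) (fun z => `|f1 z.1 - f2 z.1|) <=
          Rintegral P (E `*` setT) (fun z => \1_(U eps f1 f2) z.1 + eps).
  apply: le_Rintegral => //.
  - have [M hM] := bndB b1 b2.
    apply: (integ1 Xdiscrete P E (g := fun x => `|f1 x - f2 x|)).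
    by exists M => x; rewrite normr_id; exact: hM.
  - apply: (integ1 Xdiscrete P E (g := fun x => \1_(U eps f1 f2) x + eps)).
    exists (1 + eps) => x; rewrite ger0_norm ?lerD2r; last by rewrite addr_ge0 // ?ltW // indicE.
    by rewrite indicE; case: (_ \in _).
  - move=> z _; rewrite indicE; case: (boolP (z.1 \in _)) => hz.
      by rewrite /=; have := hd z.1; have := ltW heps; lra.
    have : ~ (eps < `|f1 z.1 - f2 z.1|) by move=> h; move/negP: hz; apply; rewrite in_setE.
    move/negP; rewrite -leNgt /=; lra.
have h3 : Rintegral P (E `*` setT) (fun z => \1_(U eps f1 f2) z.1 + eps) =
          Rintegral P (E `*` setT) (fun z => \1_(U eps f1 f2) z.1) + eps * mu P E.
  rewrite (RintegralD mE (integ1 Xdiscrete P E bI) (integ1 Xdiscrete P E (bndC _ eps))).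
  by rewrite Rint_cst.
have h4 : Rintegral P (E `*` setT) (fun z => \1_(U eps f1 f2) z.1) <= mu P (U eps f1 f2).
  have -> : (fun z : X * bool => \1_(U eps f1 f2) z.1 : R) = \1_(U eps f1 f2 `*` setT).
    apply/funext => z; rewrite !indicE; congr (_%:R).
    by rewrite in_setX in_setT andbT.
  rewrite /Rintegral integral_indic // /mu fine_le ?fin_num_measure //; try exact: measurableI.
  by apply: le_measure; rewrite ?inE //; apply: measurableI.
lra.
Qed.
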